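(* Let $p$ be an odd prime, let $\nu_k=2\cos\left(\frac{(2k-1)\pi}{2p}\right)$ for $1\le k\le p$, and let $\theta_1,\dots,\theta_{p-1}$ be the nodes $\nu_k$ with $k\ne\frac{p+1}{2}$, listed in the order: $\nu_{(p+1)/2}$ is replaced by $\nu_1$ in the list $\nu_1,\dots,\nu_p$ and the first entry is removed. Let $R_i^*(x)\in\mathbb{Z}[x]$, $1\le i\le p-1$, be monic of degree $i$ with zero constant term, given by $R_i^*(x)=2T_i(x/2)+2r_i$ where $r_i=0$ for $i$ odd, $r_i=1$ for $i\equiv2\pmod4$, $r_i=-1$ for $i\equiv0\pmod4$, and let $N_{4p}=(R_i^*(\theta_j))_{1\le j\le p-1,\,1\le i\le p-1}$. Then $$N_{4p}=P\,U_{4p},\qquad P=\mathrm{diag}(\theta_1,\dots,\theta_{p-1}),\qquad U_{4p}=\big(r_i^*(\theta_j)\big)_{1\le j\le p-1,\ 0\le i\le p-2},$$ where for each $i\in\{0,\dots,p-2\}$ the polynomial $r_i^*(x)\in\mathbb{Z}[x]$ is monic of degree $i$. Moreover $\mathrm{Cond}(U_{4p})\le p^3(p+1)(2p-1)^2$.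
   Context: $T_i$ is the Tchebycheff polynomial of the first kind ($T_0=1$, $T_1=x$, $T_i=2xT_{i-1}-T_{i-2}$). For an invertible complex matrix $A$, $\|A\|=\sqrt{\mathrm{Tr}(AA^* )}$ is the Frobenius norm and $\mathrm{Cond}(A)=\|A\|\,\|A^{-1}\|$. The matrix $N_{4p}$ is the lower-right $(p-1)\times(p-1)$ block of $FQ_{4p}C$, where $Q_{4p}$ is $(2T_i(\nu_k/2))_{k,i}$ with rows $1$ and $\frac{p+1}{2}$ interchanged, $F$ subtracts the first row from all other rows, and $C$ adds $r_i$ times column $0$ to column $i$. *)

(* Defs.v *)
From HB Require Import structures.
From mathcomp Require Import all_boot all_order all_algebra.
From mathcomp Require Import reals trigo.
Set Implicit Arguments. Unset Strict Implicit. Unset Printing Implicit Defensive.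
Import Order.TTheory GRing.Theory Num.Theory.
Local Open Scope ring_scope.

Fixpoint cheb_aux (n : nat) : {poly int} * {poly int} :=
  match n with
  | 0%N => (1, 'X)
  | n'.+1 => let: (a, b) := cheb_aux n' in (b, 2%:P * 'X * b - a)
  end.
Definition cheb (n : nat) : {poly int} := (cheb_aux n).1.

Definition evalZ {R : realType} (q : {poly int}) (x : R) : R :=
  (map_poly intr q).[x].

Definition nu {R : realType} (p k : nat) : R :=
  2 * cos (((2 * k - 1)%N)%:R * pi / (2 * p)%:R).

(* theta_j, 1 <= j <= p-1: nu_1,...,nu_p with nu_{(p+1)/2} replaced by nu_1,
   first entry removed. *)
Definition theta {R : realType} (p j : nat) : R :=
  if (j == (p - 1) %/ 2)%N then nu p 1 else nu p j.+1.

Definition rcoef {R : realType} (i : nat) : R :=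
  if odd i then 0 else if (i %% 4 == 2)%N then 1 else -1.

Definition Rstar {R : realType} (i : nat) (x : R) : R :=
  2 * evalZ (cheb i) (x / 2) + 2 * rcoef i.

(* N_{4p} = (R_i^*(theta_j))_{1<=j<=p-1, 1<=i<=p-1} ; 0-based indices *)
Definition N4p {R : realType} (p : nat) : 'M[R]_(p.-1) :=
  \matrix_(j < p.-1, i < p.-1) Rstar i.+1 (theta p j.+1).

Definition Pdiag {R : realType} (p : nat) : 'M[R]_(p.-1) :=
  diag_mx (\row_(j < p.-1) theta p j.+1).

Definition U4p {R : realType} (p : nat) (r : nat -> {poly int}) : 'M[R]_(p.-1) :=
  \matrix_(j < p.-1, i < p.-1) evalZ (r i) (theta p j.+1).

(* Frobenius norm sqrt(Tr(A A^H)), A^H = conjugate transpose = A^T for real A *)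
Definition frob {R : realType} {n : nat} (A : 'M[R]_n) : R :=
  Num.sqrt (\tr (A *m A^T)).

Definition Cond {R : realType} {n : nat} (A : 'M[R]_n) : R :=
  frob A * frob (invmx A).

(* Main.v *)
Require Import Defs.
From HB Require Import structures.
From mathcomp Require Import all_boot all_order all_algebra.
From mathcomp Require Import reals trigo.
From mathcomp Require Import ring lra zify.
Import Order.TTheory GRing.Theory Num.Theory.
Local Open Scope ring_scope.

Fixpoint dick_aux (n : nat) : {poly int} * {poly int} :=
  match n with
  | 0%N => (2%:P, 'X)
  | n'.+1 => let: (a, b) := dick_aux n' in (b, 'X * b - a)
  end.
Definition dick (n : nat) : {poly int} := (dick_aux n).1.

Lemma dickSS n : dick n.+2 = 'X * dick n.+1 - dick n.
Proof. by rewrite /dick /=; case: (dick_aux n). Qed.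
Lemma dick0 : dick 0 = 2%:P. Proof. by []. Qed.
Lemma dick1 : dick 1 = 'X. Proof. by []. Qed.

Lemma chebSS n : cheb n.+2 = 2%:P * 'X * cheb n.+1 - cheb n.
Proof. by rewrite /cheb /=; case: (cheb_aux n). Qed.
Lemma cheb0 : cheb 0 = 1. Proof. by []. Qed.
Lemma cheb1 : cheb 1 = 'X. Proof. by []. Qed.

Fixpoint qp (m : nat) : {poly int} :=
  match m with
  | 0%N => 0
  | 1%N => 1
  | m'.+2 => dick m'.+1 - qp m'
  end.

Lemma dick_props2 n : (size (dick n) = n.+1) /\
                   (size (dick n.+1) = n.+2 /\ dick n.+1 \is monic).
Proof.
elim: n => [|n [s0 [s1 m1]]].
  by rewrite dick0 dick1 size_polyC size_polyX monicX.
split; first by [].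
have hs : size ('X * dick n.+1) = n.+3.
  by rewrite size_monicM ?monicX ?size_polyX ?s1 // monic_neq0.
rewrite dickSS; split.
  by rewrite size_polyDl hs // size_polyN s0.
rewrite monicE lead_coefDl ?hs ?size_polyN ?s0 //.
by rewrite lead_coef_monicM ?monicX.
Qed.

Lemma dick_mon n : (0 < n)%N -> dick n \is monic /\ size (dick n) = n.+1.
Proof. by case: n => // n _; have [_ [? ?]] := dick_props2 n. Qed.

Lemma qp_props2 m : (size (qp m) = m /\ ((0 < m)%N -> qp m \is monic)) /\
                    (size (qp m.+1) = m.+1 /\ qp m.+1 \is monic).
Proof.
elim: m => [|m [[s0 m0] [s1 m1]]].
  by rewrite /= size_poly0 size_poly1 monic1.
split; first by split.
have [md sd] := @dick_mon m.+1 (ltn0Sn m).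
rewrite /=; split.
  by rewrite size_polyDl ?sd // size_polyN s0.
by rewrite monicE lead_coefDl ?sd ?size_polyN ?s0 //.
Qed.

Lemma qp_mon m : (0 < m)%N -> qp m \is monic /\ size (qp m) = m.
Proof. by case: m => // m _; have [_ [? ?]] := qp_props2 m. Qed.

Section Eval.
Variable R : realType.

Lemma evalZB (p q : {poly int}) (x : R) : evalZ (p - q) x = evalZ p x - evalZ q x.
Proof. by rewrite /evalZ rmorphB /= hornerD hornerN. Qed.
Lemma evalZXM (p : {poly int}) (x : R) : evalZ ('X * p) x = x * evalZ p x.
Proof. by rewrite /evalZ rmorphM /= map_polyX hornerM hornerX. Qed.
Lemma evalZC (c : int) (x : R) : evalZ c%:P x = c%:~R.
Proof. by rewrite /evalZ map_polyC hornerC. Qed.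
Lemma evalZ0 (x : R) : evalZ 0 x = 0.
Proof. by rewrite /evalZ rmorph0 horner0. Qed.
Lemma evalZ1 (x : R) : evalZ 1 x = 1.
Proof. by rewrite /evalZ rmorph1 hornerC. Qed.
Lemma evalZX (x : R) : evalZ 'X x = x.
Proof. by rewrite /evalZ map_polyX hornerX. Qed.

Lemma dickE (x : R) n : evalZ (dick n.+2) x = x * evalZ (dick n.+1) x - evalZ (dick n) x.
Proof. by rewrite dickSS evalZB evalZXM. Qed.

Lemma chebE (x : R) n : evalZ (cheb n.+2) x = 2 * x * evalZ (cheb n.+1) x - evalZ (cheb n) x.
Proof.
rewrite chebSS evalZB /evalZ rmorphM rmorphM /= map_polyX map_polyC hornerE /=.
rewrite !hornerE /=; ring.
Qed.

Lemma cheb_dick (x : R) n : 2 * evalZ (cheb n) (x / 2) = evalZ (dick n) x.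
Proof.
suff : (2 * evalZ (cheb n) (x / 2) = evalZ (dick n) x) /\
       (2 * evalZ (cheb n.+1) (x / 2) = evalZ (dick n.+1) x) by case.
elim: n => [|n [h0 h1]].
  rewrite cheb0 cheb1 dick0 dick1 evalZ1 evalZX evalZC evalZX; split; first by rewrite mulr1.
  by field.
split=> //.
rewrite chebE dickE -h0 -h1; by field.
Qed.

Lemma Rstar_dick i (x : R) : Rstar i x = evalZ (dick i) x + 2 * rcoef i.
Proof. by rewrite /Rstar cheb_dick. Qed.

Lemma rcoefSS b : rcoef (R:=R) b.+2 = - rcoef b.
Proof.
rewrite /rcoef /= negbK.
case: (boolP (odd b)) => ob; first by rewrite oppr0.
have : (b %% 4 == 0)%N || (b %% 4 == 2)%N.
  have h2 : (b %% 2 = 0)%N by rewrite modn2 (negbTE ob).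
  apply/orP; lia.
case/orP=> /eqP h.
  have -> : (b.+2 %% 4 == 2)%N by lia.
  by rewrite h /= opprK.
have -> : (b.+2 %% 4 == 2)%N = false by lia.
by rewrite h /=.
Qed.

Lemma keyK b (x : R) : evalZ (dick b) x + 2 * rcoef b = x * evalZ (qp b) x.
Proof.
suff : (evalZ (dick b) x + 2 * rcoef b = x * evalZ (qp b) x) /\
       (evalZ (dick b.+1) x + 2 * rcoef b.+1 = x * evalZ (qp b.+1) x) by case.
elim: b => [|b [h0 h1]].
  rewrite dick0 dick1 /= evalZC evalZX evalZ0 evalZ1 /rcoef /=; split; last by rewrite mulr0 addr0 mulr1.
  by rewrite mulr0 mulrN1 subrr.
split=> //.
rewrite dickE rcoefSS /= evalZB.
have -> : x * (evalZ (dick b.+1) x - evalZ (qp b) x) = x * evalZ (dick b.+1) x - x * evalZ (qp b) x by ring.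
rewrite -h0; ring.
Qed.

End Eval.

Section Trig.
Variable R : realType.

Lemma cos_rec (y : R) n : cos (n.+2%:R * y) = 2 * cos y * cos (n.+1%:R * y) - cos (n%:R * y).
Proof.
have e1 : n.+2%:R * y = n.+1%:R * y + y by rewrite !mulrS; ring.
have e2 : n%:R * y = n.+1%:R * y - y by rewrite !mulrS; ring.
rewrite e1 e2 cosD cosB; ring.
Qed.

Lemma dick_cos (y : R) n : evalZ (dick n) (2 * cos y) = 2 * cos (n%:R * y).
Proof.
suff : (evalZ (dick n) (2 * cos y) = 2 * cos (n%:R * y)) /\
       (evalZ (dick n.+1) (2 * cos y) = 2 * cos (n.+1%:R * y)) by case.
elim: n => [|n [h0 h1]].
  by rewrite dick0 dick1 evalZC evalZX mul0r cos0 mul1r mulr1.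
split=> //.
rewrite dickE h0 h1 cos_rec; ring.
Qed.

Lemma dick_bound (y : R) n : `|evalZ (dick n) (2 * cos y)| <= 2.
Proof.
rewrite dick_cos normrM ger0_norm //.
have := cos_max (n%:R * y); nra.
Qed.

Lemma qp_bound (y : R) m : `|evalZ (qp m) (2 * cos y)| <= m%:R.
Proof.
suff : (`|evalZ (qp m) (2 * cos y)| <= m%:R) /\
       (`|evalZ (qp m.+1) (2 * cos y)| <= m.+1%:R) by case.
elim: m => [|m [h0 h1]].
  by rewrite /= evalZ0 evalZ1 normr0 normr1.
split=> //.
rewrite /= evalZB.
apply: (le_trans (ler_normB _ _)).
have := dick_bound y m.+1.
rewrite !mulrS in h0 *; lra.
Qed.

End Trig.

Section Sum.
Variable R : realType.

Lemma sin_natpi m : sin (m%:R * pi) = 0 :> R.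
Proof.
elim: m => [|m IH]; first by rewrite mul0r sin0.
by rewrite mulrS mulrDl mul1r sinD IH sinpi mul0r mulr0 addr0.
Qed.

Lemma cos_sum0 (p m : nat) : (0 < m < 2 * p)%N ->
  \sum_(k < p) cos (m%:R * ((2 * k + 1)%N%:R * pi / (2 * p)%N%:R)) = 0 :> R.
Proof.
move=> /andP [m0 mp].
have p0 : (0 < 2 * p)%N by lia.
have p0R : 0 < (2 * p)%N%:R :> R by rewrite ltr0n.
set x : R := m%:R * pi / (2 * p)%N%:R.
have sx : 0 < sin x.
  apply: sin_gt0_pi; apply/andP; split.
    by rewrite /x divr_gt0 // mulr_gt0 ?pi_gt0 // ltr0n.
  rewrite /x ltr_pdivrMr // mulrC ltr_pM2l ?pi_gt0 // ltr_nat //.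
have tel : \sum_(k < p) (2 * sin x * cos (m%:R * ((2 * k + 1)%N%:R * pi / (2 * p)%N%:R)))
   = sin (m%:R * pi).
  rewrite -(big_mkord xpredT (fun k => 2 * sin x * cos (m%:R * ((2 * k + 1)%N%:R * pi / (2 * p)%N%:R)))).
  rewrite (@telescope_sumr_eq _ _ _ (fun k => sin ((2 * k)%N%:R * x))) //.
    rewrite muln0 mul0r sin0 subr0 /x; congr sin.
    rewrite natrM; field.
    by rewrite pnatr_eq0; lia.
  move=> k _.
  set u := (2 * k + 1)%N%:R * x.
  have e1 : m%:R * ((2 * k + 1)%N%:R * pi / (2 * p)%N%:R) = u by rewrite /u /x; ring.
  have e2 : (2 * k.+1)%N%:R * x = u + x.
    by rewrite /u (_ : (2 * k.+1)%N = (2*k+1) + 1)%N ?natrD; [ring | lia].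
  have e3 : (2 * k)%N%:R * x = u - x.
    by rewrite /u natrD; ring.
  rewrite e1 e2 e3 sinD sinB; ring.
move: tel; rewrite sin_natpi -mulr_sumr => /eqP; rewrite mulf_eq0 => /orP [|/eqP //].
rewrite mulf_eq0 pnatr_eq0 /= => /eqP sx0.
by move: sx; rewrite sx0 ltxx.
Qed.

Lemma cos_sum_0 (p : nat) :
  \sum_(k < p) cos (0%:R * ((2 * k + 1)%N%:R * pi / (2 * p)%N%:R)) = p%:R :> R.
Proof.
under eq_bigr do rewrite mul0r cos0.
by rewrite sumr_const card_ord.
Qed.

End Sum.

Section Orth.
Variable R : realType.

Lemma nuE p k : nu (R:=R) p k.+1 = 2 * cos ((2 * k + 1)%N%:R * pi / (2 * p)%N%:R).
Proof. by rewrite /nu (_ : (2 * k.+1 - 1 = 2 * k + 1)%N) //; lia. Qed.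

Lemma full_orth p a b : (0 < a < p)%N -> (0 < b < p)%N ->
  \sum_(k < p) evalZ (dick a) (nu (R:=R) p k.+1) *
      (evalZ (dick b) (nu p k.+1) + 2 * rcoef b) = (2 * p)%N%:R * (a == b)%:R.
Proof.
move=> /andP [a0 ap] /andP [b0 bp].
pose S m := \sum_(k < p) cos (m%:R * ((2 * k + 1)%N%:R * pi / (2 * p)%N%:R)) : R.
pose d := if (b <= a)%N then (a - b)%N else (b - a)%N.
have pt : forall y : R, 2 * cos (a%:R * y) * (2 * cos (b%:R * y) + 2 * rcoef b) =
     2 * cos ((a + b)%N%:R * y) + 2 * cos (d%:R * y) + 4 * rcoef b * cos (a%:R * y).
  move=> y.
  have e1 : (a + b)%N%:R * y = a%:R * y + b%:R * y by rewrite natrD mulrDl.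
  have e2 : cos (d%:R * y) = cos (a%:R * y - b%:R * y).
    rewrite /d; case: leqP => h.
      by rewrite natrB // mulrBl.
    by rewrite natrB ?(ltnW h) // mulrBl -cosN opprB.
  rewrite e1 e2 cosD cosB; ring.
have -> : \sum_(k < p) evalZ (dick a) (nu (R:=R) p k.+1) *
      (evalZ (dick b) (nu p k.+1) + 2 * rcoef b) =
   2 * S (a + b)%N + 2 * S d + 4 * rcoef b * S a.
  rewrite /S !mulr_sumr -!big_split /=; apply: eq_bigr => k _.
  by rewrite nuE !dick_cos pt.
have Sab : S (a + b)%N = 0 by apply: cos_sum0; apply/andP; lia.
have Sa : S a = 0 by apply: cos_sum0; apply/andP; lia.
rewrite Sab Sa !mulr0 addr0 add0r /S.
case: (eqVneq a b) => [eab|neq].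
  rewrite /d eab leqnn subnn.
  under eq_bigr do rewrite mul0r cos0.
  by rewrite sumr_const card_ord mulr1 natrM mulr_natl.
rewrite cos_sum0 ?mulr0 ?mul0r //.
move/eqP: neq => neq; rewrite /d; case: (leqP b a) => h; apply/andP; lia.
Qed.

End Orth.

Section Final.
Variable R : realType.

Lemma theta_sum p (g : R -> R) : (3 <= p)%N ->
  \sum_(j < p.-1) g (theta p j.+1) =
  \sum_(k < p) g (nu p k.+1) - g (nu p ((p - 1) %/ 2).+1).
Proof.
case: p => // n n2 /=.
have -> : (n.+1 - 1 = n)%N by lia.
set h := (n %/ 2)%N.
have h1 : (0 < h)%N by rewrite /h; lia.
have hn : (h.-1 < n)%N by rewrite /h; lia.
pose j0 : 'I_n := Ordinal hn.
rewrite (bigD1 j0) //= [in RHS]big_ord_recl [in RHS](bigD1 j0) //=.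
have -> : theta (R:=R) n.+1 h.-1.+1 = nu n.+1 1.
  rewrite /theta (_ : (n.+1 - 1)%N = n); last lia.
  by rewrite prednK // -/h eqxx.
have -> : \sum_(i < n | i != j0) g (theta n.+1 i.+1) =
          \sum_(i < n | i != j0) g (nu n.+1 (lift ord0 i).+1).
  apply: eq_bigr => i ij.
  rewrite /theta (_ : (n.+1 - 1)%N = n); last lia.
  have -> : (i.+1 == h)%N = false.
    apply/negbTE; apply: contra ij => /eqP e; apply/eqP; apply: val_inj => /=; lia.
  by [].
have -> : bump 0 h.-1 = h by rewrite /bump; lia.
ring.
Qed.

Lemma nu_mid p : odd p -> nu (R:=R) p ((p - 1) %/ 2).+1 = 0.
Proof.
move=> op.
have p0 : (0 < p)%N by case: p op.
have e : p = (2 * p./2 + 1)%N.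
  have := odd_double_half p; rewrite op -muln2 /= => e.
  by rewrite -{1}e addnC mulnC.
have -> : ((p - 1) %/ 2 = p./2)%N by rewrite {1}e addnK mulKn.
rewrite nuE -e.
have -> : p%:R * pi / (2 * p)%N%:R = pi / 2 :> R.
  rewrite natrM; field.
  by rewrite pnatr_eq0 -lt0n.
by rewrite cos_pihalf mulr0.
Qed.

Lemma theta_cos p j : exists y : R, theta p j = 2 * cos y.
Proof. rewrite /theta; case: ifP => _; rewrite /nu; eexists; reflexivity. Qed.

Lemma frob_bound n (A : 'M[R]_n) (M : R) : 0 <= M ->
  (forall i j, `|A i j| <= M) -> frob A <= n%:R * M.
Proof.
move=> M0 hA.
have nM : 0 <= n%:R * M by rewrite mulr_ge0.
rewrite /frob.
rewrite -(ger0_norm nM) -(sqrtr_sqr (n%:R * M)).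
rewrite ler_sqrt; last by rewrite sqr_ge0.
rewrite /mxtrace.
apply: (@le_trans _ _ (\sum_(i < n) \sum_(k < n) (M * M))).
  apply: ler_sum => i _; rewrite !mxE; apply: ler_sum => k _; rewrite mxE.
  apply: (le_trans (ler_norm _)); rewrite normrM.
  by apply: ler_pM; rewrite ?normr_ge0.
rewrite !sumr_const !card_ord.
have -> : M * M *+ n *+ n = (n%:R * M) ^+ 2.
 by ring.
exact: lexx.
Qed.

End Final.

Theorem mainTheorem7 (R : realType) (p : nat) :
  prime p -> odd p ->
  exists r : nat -> {poly int},
    (forall i : nat, (i <= p - 2)%N -> r i \is monic /\ size (r i) = i.+1) /\
    N4p p = Pdiag p *m U4p (R:=R) p r /\
    U4p (R:=R) p r \in unitmx /\
    Cond (U4p (R:=R) p r) <= (p ^ 3 * (p + 1) * (2 * p - 1) ^ 2)%N%:R.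
Proof.
move=> pr op.
have p3 : (3 <= p)%N by have := odd_prime_gt2 op pr.
exists (fun i => qp i.+1).
split.
  by move=> i _; have [m s] := @qp_mon i.+1 (ltn0Sn i).
set U := U4p p (fun i => qp i.+1).
have p0R : (2 * p)%N%:R != 0 :> R by rewrite pnatr_eq0; lia.
pose W : 'M[R]_(p.-1) := \matrix_(i, j)
   (evalZ (dick i.+1) (theta p j.+1) * theta p j.+1 / (2 * p)%N%:R).
have WU : W *m U = 1%:M.
  apply/matrixP => i i'; rewrite !mxE.
  transitivity ((\sum_(j < p.-1) evalZ (dick i.+1) (theta (R:=R) p j.+1) *
       (evalZ (dick i'.+1) (theta p j.+1) + 2 * rcoef i'.+1)) / (2 * p)%N%:R).
    rewrite mulr_suml; apply: eq_bigr => j _; rewrite !mxE keyK; ring.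
  rewrite (@theta_sum R p (fun x => evalZ (dick i.+1) x * (evalZ (dick i'.+1) x + 2 * rcoef i'.+1))) //.
  rewrite nu_mid // keyK mul0r mulr0 subr0 full_orth; last 2 first.
  - by apply/andP; split => //; have := ltn_ord i; lia.
  - by apply/andP; split => //; have := ltn_ord i'; lia.
  rewrite eqSS mulrC mulrA mulVf // mul1r.
  by [].
have [_ Uu] := mulmx1_unit WU.
have invU : invmx U = W.
  by rewrite -[invmx U]mul1mx -WU -mulmxA mulmxV // mulmx1.
split.
  apply/matrixP => j i; rewrite /Pdiag mul_diag_mx !mxE Rstar_dick keyK.
  by [].
split=> //.
rewrite /Cond invU.
have hU : frob U <= p.-1%:R * p%:R.
  apply: frob_bound => // j i; rewrite mxE.
  have [y ->] := theta_cos R p j.+1.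
  apply: (le_trans (qp_bound _ _ _)); rewrite ler_nat; have := ltn_ord i; lia.
have hW : frob W <= p.-1%:R * 4.
  apply: frob_bound => // i j; rewrite mxE.
  have [y ->] := theta_cos R p j.+1.
  rewrite normrM normfV normrM.
  have -> : `|(2 * p)%N%:R| = (2 * p)%N%:R :> R by rewrite ger0_norm ?ler0n.
  have h1 := dick_bound R y i.+1.
  have h2 : `|2 * cos y| <= 2 :> R.
    rewrite normrM ger0_norm //; have := cos_max y; lra.
  have h3 : ((2 * p)%N%:R)^-1 <= 1 :> R by rewrite invf_le1 ?ltr0n ?ler1n; lia.
  have h4 : 0 <= ((2 * p)%N%:R)^-1 :> R by rewrite invr_ge0 ler0n.
  have h5 : `|evalZ (dick i.+1) (2 * cos y)| * `|2 * cos y| <= 2 * 2.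
    by apply: ler_pM; rewrite ?normr_ge0.
  have h6 : 0 <= `|evalZ (dick i.+1) (2 * cos y)| * `|2 * cos y| by rewrite mulr_ge0 ?normr_ge0.
  nra.
apply: (le_trans (ler_pM _ _ hU hW)); rewrite ?sqrtr_ge0 //.
have -> : p.-1%:R * p%:R * (p.-1%:R * 4) = (p.-1 * p * (p.-1 * 4))%N%:R :> R.
  by rewrite !natrM.
rewrite ler_nat.
have -> : p.-1 = (p - 1)%N by lia.
nia.
Qed.
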